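(* For every real $x>1$, $$\mathcal L\left(\frac{1}{\left(x+\sqrt{x^2-1}\right)^2}\right)=\sum_{m=1}^{\infty}\mathcal L\left(\frac{1}{U_m(x)^2}\right),$$ where $U_m$ is the $m$-th Chebyshev polynomial of the second kind.
   Context: $\mathcal L$ is the Rogers dilogarithm: for real $z\le1$, $\mathcal L(z)=\mathrm{Li}_2(z)+\tfrac12\log|z|\log(1-z)$, where $\mathrm{Li}_2(z)=\sum_{m\ge1}z^m/m^2$. The Chebyshev polynomials of the second kind $U_m\in\mathbb Z[x]$ are determined by $U_m(\cos\theta)=\sin((m+1)\theta)/\sin\theta$. *)

(* Defs.v *)
From Stdlib Require Import Reals ClassicalEpsilon.
Open Scope R_scope.

(* Li_2(z) = sum_{m>=1} z^m / m^2, taken as the sum of the (convergent for |z|<=1)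
   series; chosen via epsilon (the value is unique whenever the series converges). *)
Definition Li2 (z : R) : R :=
  epsilon (inhabits 0)
    (fun l => infinite_sum (fun n => z ^ (S n) / (INR (S n)) ^ 2) l).

Definition rogersL (z : R) : R :=
  Li2 z + / 2 * ln (Rabs z) * ln (1 - z).

(* Chebyshev polynomials of the second kind, evaluated at x:
   U_0 = 1, U_1 = 2x, U_{m+2} = 2x U_{m+1} - U_m. *)
Fixpoint chebU_pair (m : nat) (x : R) : R * R :=
  match m with
  | O => (1, 2 * x)
  | S k => let p := chebU_pair k x in (snd p, 2 * x * snd p - fst p)
  end.

Definition chebU (m : nat) (x : R) : R := fst (chebU_pair m x).

(* Main.v *)
Require Import Defs.
From Coquelicot Require Import Coquelicot.
From Stdlib Require Import Reals Lra Lia ClassicalEpsilon FunctionalExtensionality.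
Open Scope R_scope.

Definition one_s : nat -> R := fun _ => 1.
Definition gco : nat -> R := PS_Int one_s.
Definition bco : nat -> R := PS_decr_1 gco.
Definition cco : nat -> R := PS_Int bco.

Lemma rad_one : CV_radius one_s = 1.
Proof.
  rewrite (CV_radius_finite_DAlembert one_s 1).
  - simpl; f_equal; lra.
  - intros; unfold one_s; lra.
  - lra.
  - unfold one_s. eapply is_lim_seq_ext; [|apply is_lim_seq_const].
    intros n; simpl. unfold Rdiv; rewrite Rinv_1, Rmult_1_r, Rabs_R1. reflexivity.
Qed.

Lemma rad_c : CV_radius cco = 1.
Proof. unfold cco, bco, gco. now rewrite CV_radius_Int, CV_radius_decr_1, CV_radius_Int, rad_one. Qed.
Lemma rad_b : CV_radius bco = 1.
Proof. unfold bco, gco. now rewrite CV_radius_decr_1, CV_radius_Int, rad_one. Qed.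
Lemma rad_g : CV_radius gco = 1.
Proof. unfold gco. now rewrite CV_radius_Int, rad_one. Qed.

Lemma Li2_eq (z : R) : Rabs z < 1 -> Li2 z = PSeries cco z.
Proof.
  intros Hz.
  assert (Hin : Rbar_lt (Rabs z) (CV_radius cco)) by (rewrite rad_c; exact Hz).
  assert (H : infinite_sum (fun n => z ^ (S n) / (INR (S n)) ^ 2) (PSeries cco z)).
  { apply is_series_Reals.
    pose proof (PSeries_correct _ _ (CV_radius_inside _ _ Hin)) as Hp.
    unfold is_pseries in Hp.
    assert (Hp' : is_series (fun k : nat => scal (pow_n z k) (cco k))
              (plus (PSeries cco z) (scal (pow_n z 0) (cco 0%nat)))).
    { replace (plus (PSeries cco z) (scal (pow_n z 0) (cco 0%nat))) with (PSeries cco z); auto.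
      change (PSeries cco z = PSeries cco z + (pow_n z 0 * 0)). ring. }
    apply (@is_series_incr_1 R_AbsRing R_NormedModule) in Hp'.
    eapply is_series_ext; [|exact Hp'].
    intros n. rewrite pow_n_pow. unfold cco, bco, gco, PS_Int, PS_decr_1, one_s.
    change (scal (z ^ S n) (1 / INR (S n) / INR (S n))) with (z ^ S n * (1 / INR (S n) / INR (S n))).
    assert (INR (S n) <> 0) by (apply not_0_INR; discriminate).
    change (z ^ S n * (1 / INR (S n) / INR (S n)) = z ^ S n / INR (S n) ^ 2).
    field. auto. }
  unfold Li2. apply uniqueness_sum with (fun n => z ^ (S n) / (INR (S n)) ^ 2); auto.
  apply epsilon_spec. eauto.
Qed.

Lemma dplus (f g : R -> R) (x df dg : R) : is_derive f x df -> is_derive g x dg ->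
  is_derive (fun t => f t + g t) x (df + dg).
Proof. intros; apply (is_derive_plus f g); auto. Qed.
Lemma dmult (f g : R -> R) (x df dg : R) : is_derive f x df -> is_derive g x dg ->
  is_derive (fun t => f t * g t) x (df * g x + f x * dg).
Proof. intros; apply (is_derive_mult f g); auto. intros; apply Rmult_comm. Qed.
Lemma dcomp (f g : R -> R) (x df dg : R) : is_derive f (g x) df -> is_derive g x dg ->
  is_derive (fun t => f (g t)) x (dg * df).
Proof. intros; apply (is_derive_comp f g); auto. Qed.
Lemma drepl (f : R -> R) (x d d' : R) : is_derive f x d -> d = d' -> is_derive f x d'.
Proof. intros H ->; exact H. Qed.

Lemma const_interval (f : R -> R) (lo hi : R) : (forall t, lo < t < hi -> is_derive f t 0) ->
  forall a b, lo < a < hi -> lo < b < hi -> f a = f b.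
Proof.
  intros Hd a b Ha Hb.
  destruct (MVT_gen f a b (fun _ => 0)) as [c [_ Hc]].
  - intros t Ht. apply Hd. split.
    + apply Rlt_le_trans with (Rmin a b); [apply Rmin_glb_lt; lra| lra].
    + apply Rle_lt_trans with (Rmax a b); [lra| apply Rmax_lub_lt; lra].
  - intros t Ht. apply continuity_pt_filterlim. apply (@ex_derive_continuous R_AbsRing R_NormedModule).
    exists 0. apply Hd. split.
    + apply Rlt_le_trans with (Rmin a b); [apply Rmin_glb_lt; lra| lra].
    + apply Rle_lt_trans with (Rmax a b); [lra| apply Rmax_lub_lt; lra].
  - lra.
Qed.

Lemma rin (a : nat -> R) z : CV_radius a = 1 -> Rabs z < 1 -> Rbar_lt (Rabs z) (CV_radius a).
Proof. intros H Hz; rewrite H; exact Hz. Qed.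

Lemma dc z : Rabs z < 1 -> is_derive (PSeries cco) z (PSeries bco z).
Proof.
  intros Hz. eapply drepl. apply is_derive_PSeries, rin; auto. apply rad_c.
  apply PSeries_ext. intros n. unfold PS_derive, cco, PS_Int.
  assert (INR (S n) <> 0) by (apply not_0_INR; discriminate). field; auto.
Qed.

Lemma dg z : Rabs z < 1 -> is_derive (PSeries gco) z (/ (1 - z)).
Proof.
  intros Hz. eapply drepl. apply is_derive_PSeries, rin; auto. apply rad_g.
  rewrite PSeries_ext with (b := one_s).
  2:{ intros n. unfold PS_derive, gco, PS_Int.
  assert (INR (S n) <> 0) by (apply not_0_INR; discriminate). unfold one_s; field; auto. }
  unfold PSeries. apply is_series_unique.
  eapply is_series_ext; [|apply is_series_geom; exact Hz].
  intros n; unfold one_s; simpl; ring.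
Qed.

Lemma g_eq z : Rabs z < 1 -> PSeries gco z = - ln (1 - z).
Proof.
  intros Hz.
  assert (H : forall t, -1 < t < 1 -> is_derive (fun t => PSeries gco t + ln (1 - t)) t 0).
  { intros t Ht. eapply drepl. apply dplus. apply dg. apply Rabs_def1; lra.
    apply (dcomp ln (fun t => 1 - t)). apply is_derive_ln. lra.
    auto_derive; auto. field. lra. }
  assert (E := const_interval _ (-1) 1 H z 0).
  assert (-1 < z < 1) by (apply Rabs_def2 in Hz; lra). specialize (E ltac:(lra) ltac:(lra)). simpl in E. rewrite PSeries_0 in E. unfold gco, PS_Int in E. rewrite Rminus_0_r, ln_1 in E. simpl in E.
  change (PSeries gco z + ln (1 - z) = 0 + 0) in E. lra.
Qed.

Lemma b_eq z : Rabs z < 1 -> z <> 0 -> PSeries bco z = - ln (1 - z) / z.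
Proof.
  intros Hz Hz0. rewrite <- g_eq; auto.
  rewrite (PSeries_decr_1_aux gco z); [|reflexivity]. fold bco. field; auto.
Qed.

Definition Lr (z : R) : R := PSeries cco z + / 2 * ln z * ln (1 - z).
Definition Mf (z : R) : R := ln (1 - z) / z + ln z / (1 - z).

Lemma rogers_Lr z : 0 < z < 1 -> rogersL z = Lr z.
Proof.
  intros Hz. unfold rogersL, Lr. rewrite Li2_eq, Rabs_pos_eq; try lra.
  rewrite Rabs_pos_eq; lra.
Qed.

Lemma dLr z : 0 < z < 1 -> is_derive Lr z (- / 2 * Mf z).
Proof.
  intros Hz. unfold Lr. eapply drepl. apply dplus. apply dc. rewrite Rabs_pos_eq; lra.
  apply dmult. apply dmult. apply is_derive_const. apply is_derive_ln; lra.
  apply (dcomp ln (fun t => 1 - t)). apply is_derive_ln. lra.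
  auto_derive; auto.
  rewrite b_eq; [|rewrite Rabs_pos_eq; lra|lra]. unfold Mf. change (zero : R) with 0. field. lra.
Qed.

Lemma key x y : 0 < x < 1 -> 0 < y < 1 ->
  Mf x - y * Mf (x * y) - (1 - y) / (1 - x * y) ^ 2 * Mf (x * (1 - y) / (1 - x * y))
   + y * (1 - y) / (1 - x * y) ^ 2 * Mf (y * (1 - x) / (1 - x * y)) = 0.
Proof.
  intros Hx Hy.
  assert (Hxy : 0 < x * y < 1) by nra.
  assert (H1 : 0 < 1 - x * y) by lra.
  unfold Mf.
  replace (1 - x * (1 - y) / (1 - x * y)) with ((1 - x) / (1 - x * y)) by (field; lra).
  replace (1 - y * (1 - x) / (1 - x * y)) with ((1 - y) / (1 - x * y)) by (field; lra).
  rewrite !ln_div by nra.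
  rewrite !ln_mult by nra.
  field. repeat split; nra.
Qed.

Lemma ln_le_m1 t : 0 < t -> ln t <= t - 1.
Proof.
  intros Ht. rewrite <- (ln_exp (t - 1)). apply ln_le; auto.
  pose proof (exp_ineq1_le (t - 1)). lra.
Qed.

Lemma logbound z : 0 < z <= / 2 -> Rabs (ln z * ln (1 - z)) <= 4 * sqrt z.
Proof.
  intros Hz. set (s := sqrt z).
  assert (Hs : 0 < s) by (apply sqrt_lt_R0; lra).
  assert (Hss : s * s = z) by (apply sqrt_sqrt; lra).
  assert (A : ln z = 2 * ln s) by (rewrite <- Hss, ln_mult; lra).
  assert (B : - ln s <= / s - 1) by (rewrite <- ln_Rinv; [apply ln_le_m1; apply Rinv_0_lt_compat|]; lra).
  assert (C : - ln (1 - z) <= z / (1 - z)).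
  { rewrite <- ln_Rinv by lra. eapply Rle_trans. apply ln_le_m1. apply Rinv_0_lt_compat; lra.
    right. field. lra. }
  assert (C0 : ln (1 - z) <= 0) by (rewrite <- ln_1; apply ln_le; lra).
  assert (A0 : ln s <= 0).
  { rewrite <- ln_1; apply ln_le; auto. assert (s * s <= 1) by lra. nra. }
  rewrite Rabs_pos_eq by nra.
  assert (z / (1 - z) <= 2 * z) by (apply Rmult_le_reg_r with (1 - z); [lra|]; unfold Rdiv; rewrite Rmult_assoc, Rinv_l; nra).
  assert (- ln s <= / s) by lra.
  assert (- ln s * s <= 1) by (apply Rmult_le_reg_r with (/ s); [apply Rinv_0_lt_compat; lra|]; rewrite Rmult_assoc, Rinv_r; lra).
  rewrite A. rewrite <- Hss in *. nra.
Qed.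

Lemma Lr_lim0 (zn : nat -> R) : (forall n, 0 < zn n <= / 2) -> is_lim_seq zn 0 ->
  is_lim_seq (fun n => Lr (zn n)) 0.
Proof.
  intros Hz Hl. unfold Lr.
  replace (0 : R) with (PSeries cco 0 + / 2 * 0) at 1.
  2:{ rewrite PSeries_0. unfold cco, PS_Int. ring. }
  apply is_lim_seq_plus'.
  - apply is_lim_seq_continuous; auto. apply PSeries_continuity. rewrite rad_c, Rabs_R0. simpl; lra.
  - apply is_lim_seq_ext with (u := fun n => / 2 * (ln (zn n) * ln (1 - zn n))). intros n; ring.
    replace (Finite (/ 2 * 0)) with (Rbar_mult (/ 2) 0) by (simpl; f_equal; ring).
    apply is_lim_seq_scal_l. apply is_lim_seq_abs_0.
    apply is_lim_seq_le_le with (u := fun _ => 0) (w := fun n => 4 * sqrt (zn n)).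
    + intros n; split; [apply Rabs_pos| apply logbound; auto].
    + apply is_lim_seq_const.
    + replace (Finite 0) with (Rbar_mult 4 (sqrt 0)) by (rewrite sqrt_0; simpl; f_equal; ring).
      apply is_lim_seq_scal_l. apply is_lim_seq_continuous; auto. apply continuity_pt_sqrt; lra.
Qed.

Lemma dminus (f g : R -> R) (x df dg : R) : is_derive f x df -> is_derive g x dg ->
  is_derive (fun t => f t - g t) x (df - dg).
Proof. intros; apply (is_derive_minus f g); auto. Qed.

Lemma Lr_cont z : 0 < z < 1 -> continuity_pt Lr z.
Proof.
  intros Hz. apply continuity_pt_filterlim. apply (@ex_derive_continuous R_AbsRing R_NormedModule).
  eexists. apply dLr; auto.
Qed.

Lemma five x y : 0 < x < 1 -> 0 < y < 1 ->
  Lr x + Lr y = Lr (x * y) + Lr (x * (1 - y) / (1 - x * y)) + Lr (y * (1 - x) / (1 - x * y)).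
Proof.
  intros Hx Hy.
  set (F := fun t => Lr t + Lr y - Lr (t * y) - Lr (t * (1 - y) / (1 - t * y))
                     - Lr (y * (1 - t) / (1 - t * y))).
  assert (HD : forall t, 0 < t < 1 -> is_derive F t 0).
  { intros t Ht.
    assert (H1 : 0 < 1 - t * y) by nra.
    assert (Hu : 0 < t * (1 - y) / (1 - t * y) < 1).
    { split. apply Rdiv_lt_0_compat; nra. apply Rmult_lt_reg_r with (1 - t * y); auto.
      unfold Rdiv; rewrite Rmult_assoc, Rinv_l; nra. }
    assert (Hv : 0 < y * (1 - t) / (1 - t * y) < 1).
    { split. apply Rdiv_lt_0_compat; nra. apply Rmult_lt_reg_r with (1 - t * y); auto.
      unfold Rdiv; rewrite Rmult_assoc, Rinv_l; nra. }
    assert (du : is_derive (fun t => t * (1 - y) / (1 - t * y)) t ((1 - y) / (1 - t * y) ^ 2)).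
    { auto_derive. lra. field. lra. }
    assert (dv : is_derive (fun t => y * (1 - t) / (1 - t * y)) t (- (y * (1 - y)) / (1 - t * y) ^ 2)).
    { auto_derive. lra. field. lra. }
    assert (dm : is_derive (fun t => t * y) t y).
    { auto_derive. auto. ring. }
    unfold F. eapply drepl.
    apply dminus. apply dminus. apply dminus. apply dplus.
    apply dLr; auto. apply is_derive_const.
    apply (dcomp Lr (fun t => t * y)). apply dLr; nra. exact dm.
    apply (dcomp Lr (fun t => t * (1 - y) / (1 - t * y))). apply dLr; auto. exact du.
    apply (dcomp Lr (fun t => y * (1 - t) / (1 - t * y))). apply dLr; auto. exact dv.
    assert (K := key t y Ht Hy).
    change (zero : R) with 0. rewrite Rplus_0_r.
    transitivity (- / 2 * 0); [|ring]. rewrite <- K. unfold Rdiv. ring. }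
  set (xn := fun n : nat => / 3 * (/ 3) ^ n).
  assert (Hxn : forall n, 0 < xn n <= / 3).
  { intros n; unfold xn. assert (0 < (/ 3) ^ n <= 1).
    { induction n; simpl; lra. }
    nra. }
  assert (Lx : is_lim_seq xn 0).
  { replace (Finite 0) with (Rbar_mult (/ 3) 0) by (simpl; f_equal; ring).
    apply is_lim_seq_scal_l. apply is_lim_seq_geom. rewrite Rabs_pos_eq; lra. }
  assert (Cu : forall (g : R -> R) t, ex_derive g t -> continuity_pt g t).
  { intros g t Hg. apply continuity_pt_filterlim. apply (@ex_derive_continuous R_AbsRing R_NormedModule). auto. }
  assert (E : forall n, F (xn n) = F x).
  { intros n. apply (const_interval F 0 1 HD); auto. specialize (Hxn n); lra. }
  assert (L1 : is_lim_seq (fun n => F (xn n)) (0 + Lr y - 0 - 0 - Lr y)).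
  { unfold F. apply is_lim_seq_minus'. apply is_lim_seq_minus'. apply is_lim_seq_minus'.
    apply is_lim_seq_plus'. apply Lr_lim0; auto. intros n; specialize (Hxn n); lra.
    apply is_lim_seq_const.
    - apply Lr_lim0. intros n; specialize (Hxn n); split; nra.
      replace 0 with ((fun t => t * y) 0) by ring. apply (is_lim_seq_continuous (fun t => t * y)); auto.
      apply Cu. auto_derive; auto.
    - apply Lr_lim0. intros n; specialize (Hxn n).
      assert (0 < 1 - xn n * y) by nra. split. apply Rdiv_lt_0_compat; nra.
      apply Rmult_le_reg_r with (1 - xn n * y); auto.
      unfold Rdiv; rewrite Rmult_assoc, Rinv_l; nra.
      replace 0 with ((fun t => t * (1 - y) / (1 - t * y)) 0) by (field; lra).
      apply (is_lim_seq_continuous (fun t => t * (1 - y) / (1 - t * y))); auto.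
      apply Cu. auto_derive. lra.
    - assert (Lv : is_lim_seq (fun n => y * (1 - xn n) / (1 - xn n * y)) y).
      { replace (Finite y) with (Finite ((fun t => y * (1 - t) / (1 - t * y)) 0)) by (f_equal; field; lra).
        apply (is_lim_seq_continuous (fun t => y * (1 - t) / (1 - t * y))); auto.
        apply Cu. auto_derive. lra. }
      apply (is_lim_seq_continuous Lr _ y). apply Lr_cont; auto. exact Lv. }
  assert (L2 : is_lim_seq (fun n => F (xn n)) (F x)).
  { eapply is_lim_seq_ext. intros n; symmetry; apply E. apply is_lim_seq_const. }
  apply is_lim_seq_unique in L1. apply is_lim_seq_unique in L2.
  rewrite L1 in L2. injection L2. unfold F. lra.
Qed.

Lemma refl a b : 0 < a < 1 -> 0 < b < 1 -> Lr a + Lr (1 - a) = Lr b + Lr (1 - b).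
Proof.
  intros Ha Hb.
  assert (HD : forall t, 0 < t < 1 -> is_derive (fun t => Lr t + Lr (1 - t)) t 0).
  { intros t Ht. eapply drepl. apply dplus. apply dLr; auto.
    apply (dcomp Lr (fun t => 1 - t)). apply dLr; lra. auto_derive; auto.
    unfold Mf. replace (1 - (1 - t)) with t by ring. field. lra. }
  apply (const_interval (fun t => Lr t + Lr (1 - t)) 0 1 HD); auto.
Qed.

Section Tele.
Variable r : R.
Hypothesis Hr : 0 < r < 1.
Definition An (n : nat) := (1 - r) / (1 - r ^ n * r ^ 2).
Definition Bn (n : nat) := r ^ n * r * ((1 - r) / (1 - r ^ n * r ^ 2)).
Definition Tn (n : nat) := Lr (An n) + Lr (Bn n).

Lemma rn_bounds n : 0 < r ^ n <= 1.
Proof. induction n; simpl; nra. Qed.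

Lemma AB_bounds n : 0 < An n < 1 /\ 0 < Bn n <= / 2.
Proof.
  pose proof (rn_bounds n). unfold An, Bn. set (s := r ^ n) in *.
  assert (0 < 1 - s * r ^ 2) by (simpl; nra).
  split; split.
  - apply Rdiv_lt_0_compat; lra.
  - apply Rmult_lt_reg_r with (1 - s * r ^ 2); auto.
    unfold Rdiv; rewrite Rmult_assoc, Rinv_l; simpl; nra.
  - apply Rmult_lt_0_compat. nra. apply Rdiv_lt_0_compat; lra.
  - apply Rmult_le_reg_r with (1 - s * r ^ 2); auto.
    replace (s * r * ((1 - r) / (1 - s * r ^ 2)) * (1 - s * r ^ 2)) with (s * r * (1 - r)) by (field; lra).
    simpl; nra.
Qed.

Lemma step n : Tn n = Lr (An n * Bn n) + Tn (S n).
Proof.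
  unfold Tn. destruct (AB_bounds n) as [HA HB].
  rewrite (five (An n) (Bn n)); [|auto|lra].
  pose proof (rn_bounds n). assert (0 < 1 - r ^ n * r ^ 2) by (simpl; nra).
  assert (0 < 1 - r ^ n * r * r ^ 2) by (simpl; nra).
  set (s := r ^ n) in *.
  assert (D : 1 - An n * Bn n = (1 - s * r) * (1 - s * r * r ^ 2) / (1 - s * r ^ 2) ^ 2).
  { unfold An, Bn; fold s. field. lra. }
  assert (0 < 1 - s * r) by nra.
  assert (E1 : An n * (1 - Bn n) / (1 - An n * Bn n) = An (S n)).
  { rewrite D. unfold An, Bn; fold s. simpl; fold s. field. repeat split; simpl in *; nra. }
  assert (E2 : Bn n * (1 - An n) / (1 - An n * Bn n) = Bn (S n)).
  { rewrite D. unfold An, Bn; fold s. simpl; fold s. field. repeat split; simpl in *; nra. }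
  rewrite E1, E2. ring.
Qed.

Lemma tele : infinite_sum (fun n => Lr (An n * Bn n)) (Lr r).
Proof.
  assert (PS : forall N, sum_f_R0 (fun n => Lr (An n * Bn n)) N = Tn 0 - Tn (S N)).
  { induction N; simpl sum_f_R0. rewrite (step 0); ring.
    rewrite IHN, (step (S N)); ring. }
  assert (Cu : forall (g : R -> R) t, ex_derive g t -> continuity_pt g t).
  { intros g t Hg. apply continuity_pt_filterlim. apply (@ex_derive_continuous R_AbsRing R_NormedModule). auto. }
  assert (G : is_lim_seq (fun n => r ^ n) 0) by (apply is_lim_seq_geom; rewrite Rabs_pos_eq; lra).
  assert (LA : is_lim_seq An (1 - r)).
  { replace (Finite (1 - r)) with (Finite ((fun t => (1 - r) / (1 - t * r ^ 2)) 0)) by (f_equal; field).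
    apply (is_lim_seq_continuous (fun t => (1 - r) / (1 - t * r ^ 2))); auto.
    apply Cu. auto_derive. simpl; lra. }
  assert (LB : is_lim_seq (fun n => Lr (Bn n)) 0).
  { apply Lr_lim0. intros n; apply AB_bounds.
    replace (Finite 0) with (Finite ((fun t => t * r * ((1 - r) / (1 - t * r ^ 2))) 0)) by (f_equal; field).
    apply (is_lim_seq_continuous (fun t => t * r * ((1 - r) / (1 - t * r ^ 2)))); auto.
    apply Cu. auto_derive. simpl; lra. }
  assert (LT : is_lim_seq Tn (Lr (1 - r) + 0)).
  { apply is_lim_seq_plus'; auto. apply (is_lim_seq_continuous Lr An (1 - r)); auto.
    apply Lr_cont; lra. }
  assert (T0 : Tn 0 = Lr r + Lr (1 - r)).
  { unfold Tn. replace (Bn 0) with (1 - An 0) by (unfold An, Bn; simpl; field; nra).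
    apply refl. apply AB_bounds. lra. }
  apply is_lim_seq_Reals.
  apply is_lim_seq_ext with (u := fun N => Tn 0 - Tn (S N)). intros; rewrite PS; auto.
  replace (Lr r) with (Tn 0 - (Lr (1 - r) + 0)) by (rewrite T0; ring).
  apply is_lim_seq_minus'. apply is_lim_seq_const.
  apply (is_lim_seq_incr_1 Tn). exact LT.
Qed.
End Tele.

Lemma cheb_pair (x q : R) : 0 < q < 1 -> 2 * x = q + / q ->
  forall m, chebU_pair m x =
    ((1 - q ^ 2 * (q ^ m) ^ 2) / ((1 - q ^ 2) * q ^ m),
     (1 - q ^ 2 * (q ^ S m) ^ 2) / ((1 - q ^ 2) * q ^ S m)).
Proof.
  intros Hq Hx m. assert (0 < 1 - q ^ 2) by (simpl; nra).
  induction m.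
  - simpl. f_equal. field. lra. rewrite Hx. field. lra.
  - simpl chebU_pair. rewrite IHm. simpl fst. simpl snd. f_equal.
    assert (0 < q ^ m) by (apply pow_lt; lra).
    rewrite Hx. simpl. field. repeat split; lra.
Qed.

Theorem corollary4 (x : R) (hx : 1 < x) :
  infinite_sum (fun n => rogersL (1 / (chebU (S n) x) ^ 2))
    (rogersL (1 / (x + sqrt (x ^ 2 - 1)) ^ 2)).
Proof.
  set (s := sqrt (x ^ 2 - 1)).
  assert (Hs0 : 0 <= s) by apply sqrt_pos.
  assert (Hss : s * s = x ^ 2 - 1) by (apply sqrt_sqrt; simpl; nra).
  set (q := x - s).
  assert (Hq : 0 < q < 1) by (unfold q; split; nra).
  assert (Hxs : (x + s) * q = 1) by (unfold q; simpl in Hss; nra).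
  assert (H2x : 2 * x = q + / q).
  { assert (x + s = / q) by (apply Rmult_eq_reg_r with q; [rewrite Rinv_l; lra | lra]).
    unfold q at 1. lra. }
  set (r := q ^ 2).
  assert (Hr : 0 < r < 1) by (unfold r; simpl; nra).
  assert (EL : 1 / (x + s) ^ 2 = r).
  { unfold r. assert (x + s = / q) by (apply Rmult_eq_reg_r with q; [rewrite Rinv_l; lra | lra]).
    rewrite H. field. lra. }
  rewrite EL, rogers_Lr by auto.
  replace (fun n => rogersL (1 / chebU (S n) x ^ 2)) with (fun n => Lr (An r n * Bn r n)).
  { apply tele; auto. }
  apply functional_extensionality. intros n.
  assert (E : 1 / chebU (S n) x ^ 2 = An r n * Bn r n).
  { unfold chebU. rewrite (cheb_pair x q Hq H2x). simpl fst.
    unfold An, Bn, r. rewrite <- pow_mult. replace (2 * n)%nat with (n * 2)%nat by lia.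
    rewrite pow_mult.
    assert (0 < q ^ n) by (apply pow_lt; lra).
    destruct (rn_bounds q Hq n). assert (q * q < 1) by nra. assert (q ^ n * q ^ n <= 1) by nra.
    assert (q * q * (q * q) < 1) by nra. simpl. field. repeat split; try lra; nra. }
  rewrite E. symmetry. apply rogers_Lr.
  destruct (AB_bounds r Hr n). split; nra.
Qed.
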